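(* For every integer $d\ge 2$, $\mathcal Q_d$ is dense in $\mathcal A_d$; consequently the spaces $\mathcal P_d$ and $\mathcal O_d$ are also dense in $\mathcal A_d$.
   Context: A polynomial knot is a map $\phi:\mathbb R\to\mathbb R^3$ with real polynomial components which is a smooth embedding ($\phi$ injective and $\phi'(t)\ne0$ for all $t$). For $d\ge2$, $\mathcal A_d$ is the set of polynomial maps $t\mapsto(f(t),g(t),h(t))$ with $\deg f\le d-2$, $\deg g\le d-1$, $\deg h\le d$ (zero polynomial allowed, degree $-\infty$), topologized via the bijection with Euclidean $\mathbb R^{3d}$ sending $(f,g,h)$ to its coefficient vector $(a_0,\dots,a_{d-2},b_0,\dots,b_{d-1},c_0,\dots,c_d)$, where $f=\sum a_it^i$, $g=\sum b_it^i$, $h=\sum c_it^i$. $\mathcal O_d$ is the set of polynomial knots in $\mathcal A_d$; $\mathcal P_d$ is the set of polynomial knots $(f,g,h)$ with $\deg f<\deg g<\deg h\le d$; $\mathcal Q_d$ is the set of polynomial knots $(f,g,h)$ with $\deg f=d-2$, $\deg g=d-1$, $\deg h=d$ exactly. *)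

(* Defs.v *)
From Stdlib Require Import Reals ZArith.
Open Scope R_scope.

(* A coefficient vector (a_0,...,a_n) is represented by a : nat -> R,
   of which only the entries a 0, ..., a n are used. *)
Definition poly_eval (a : nat -> R) (n : nat) (t : R) : R :=
  sum_f_R0 (fun i => a i * t ^ i) n.

(* Degree of the polynomial with coefficients a_0..a_n, with the zero
   polynomial having degree -1 (standing for -infinity). *)
Definition has_deg (a : nat -> R) (n : nat) (k : Z) : Prop :=
  (k = (-1)%Z /\ forall i, (i <= n)%nat -> a i = 0) \/
  (exists m : nat, k = Z.of_nat m /\ (m <= n)%nat /\ a m <> 0 /\
     forall i, (m < i <= n)%nat -> a i = 0).

Definition is_knot (f g h : R -> R) : Prop :=
  (forall s t, f s = f t -> g s = g t -> h s = h t -> s = t) /\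
  (forall t, exists df dg dh,
     derivable_pt_lim f t df /\ derivable_pt_lim g t dg /\
     derivable_pt_lim h t dh /\ ~ (df = 0 /\ dg = 0 /\ dh = 0)).

(* A point of A_d: coefficient vectors a (length d-1), b (length d), c (length d+1). *)
Definition knot_of (d : nat) (a b c : nat -> R) : Prop :=
  is_knot (poly_eval a (d - 2)) (poly_eval b (d - 1)) (poly_eval c d).

Definition in_O (d : nat) (a b c : nat -> R) : Prop := knot_of d a b c.

(* P_d (intersected with A_d, which it is contained in) *)
Definition in_P (d : nat) (a b c : nat -> R) : Prop :=
  knot_of d a b c /\
  exists kf kg kh, has_deg a (d - 2) kf /\ has_deg b (d - 1) kg /\
    has_deg c d kh /\ (kf < kg < kh)%Z.

Definition in_Q (d : nat) (a b c : nat -> R) : Prop :=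
  knot_of d a b c /\ a (d - 2)%nat <> 0 /\ b (d - 1)%nat <> 0 /\ c d <> 0.

Definition A_dist (d : nat) (a b c a' b' c' : nat -> R) : R :=
  sqrt (sum_f_R0 (fun i => (a i - a' i) ^ 2) (d - 2)
      + sum_f_R0 (fun i => (b i - b' i) ^ 2) (d - 1)
      + sum_f_R0 (fun i => (c i - c' i) ^ 2) d).

Definition dense_in_A (d : nat) (S : (nat -> R) -> (nat -> R) -> (nat -> R) -> Prop) : Prop :=
  forall (a b c : nat -> R) (eps : R), 0 < eps ->
    exists a' b' c', S a' b' c' /\ A_dist d a b c a' b' c' < eps.

(* Main.v *)
Require Import Defs.
From Stdlib Require Import Reals ZArith.
From Stdlib Require Import Lra Lia Psatz List ClassicalEpsilon Classical FinFun.
Open Scope R_scope.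

Fixpoint hh (i : nat) (s t : R) : R :=
  match i with O => 0 | S j => s ^ j + t * hh j s t end.

Definition DD (a : nat -> R) (n : nat) (s t : R) : R :=
  sum_f_R0 (fun i => a i * hh i s t) n.

Lemma DD_S a n s t : DD a (S n) s t = DD a n s t + a (S n) * hh (S n) s t.
Proof. unfold DD. apply tech5. Qed.

Lemma hh_diff i s t : (s - t) * hh i s t = s ^ i - t ^ i.
Proof.
  induction i; simpl; [ring|].
  replace ((s - t) * (s ^ i + t * hh i s t)) with ((s - t) * s ^ i + t * ((s - t) * hh i s t)) by ring.
  rewrite IHi. ring.
Qed.

Lemma poly_diff a n s t : poly_eval a n s - poly_eval a n t = (s - t) * DD a n s t.
Proof.
  induction n.
  - unfold poly_eval, DD; simpl. ring.
  - unfold poly_eval in *. rewrite !tech5, DD_S.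
    rewrite Rmult_plus_distr_l, <- IHn.
    replace ((s - t) * (a (S n) * hh (S n) s t)) with (a (S n) * ((s - t) * hh (S n) s t)) by ring.
    rewrite hh_diff. ring.
Qed.

Lemma hh_diag i t : hh i t t = INR i * t ^ (pred i).
Proof.
  induction i.
  - simpl; ring.
  - change (hh (S i) t t) with (t ^ i + t * hh i t t). rewrite IHi.
    destruct i.
    + simpl; ring.
    + rewrite (S_INR (S i)). simpl pred. simpl pow. ring.
Qed.

Lemma deriv_poly a n t : derivable_pt_lim (poly_eval a n) t (DD a n t t).
Proof.
  induction n.
  - unfold DD; simpl. replace (a 0%nat * 0) with 0 by ring.
    change (derivable_pt_lim (fct_cte (a 0%nat * 1)) t 0).
    apply derivable_pt_lim_const.
  - change (poly_eval a (S n)) with (fun x => poly_eval a n x + a (S n) * x ^ (S n)).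
    rewrite DD_S.
    apply (derivable_pt_lim_plus (poly_eval a n) (fun x => a (S n) * x ^ (S n))); auto.
    rewrite hh_diag.
    apply (derivable_pt_lim_scal (fun x => x ^ (S n))).
    apply derivable_pt_lim_pow.
Qed.

Lemma knot_crit d a b c :
  (forall s t, ~ (DD a (d-2) s t = 0 /\ DD b (d-1) s t = 0 /\ DD c d s t = 0)) ->
  knot_of d a b c.
Proof.
  intros H. split.
  - intros s t H1 H2 H3. destruct (Req_dec s t) as [E|Hne]; auto. exfalso.
    apply (H s t).
    assert (Hst : s - t <> 0) by lra.
    repeat split.
    + assert (E := poly_diff a (d-2) s t). apply Rminus_diag_eq in H1.
      rewrite H1 in E. destruct (Rmult_integral _ _ (eq_sym E)); [lra|auto].
    + assert (E := poly_diff b (d-1) s t). apply Rminus_diag_eq in H2.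
      rewrite H2 in E. destruct (Rmult_integral _ _ (eq_sym E)); [lra|auto].
    + assert (E := poly_diff c d s t). apply Rminus_diag_eq in H3.
      rewrite H3 in E. destruct (Rmult_integral _ _ (eq_sym E)); [lra|auto].
  - intros t. exists (DD a (d-2) t t), (DD b (d-1) t t), (DD c d t t).
    repeat split; try apply deriv_poly. apply H.
Qed.

Definition Lip (R0 : R) (phi : R -> R -> R) : Prop :=
  exists B L, forall s t s' t', Rabs s <= R0 -> Rabs t <= R0 -> Rabs s' <= R0 -> Rabs t' <= R0 ->
    Rabs (phi s t) <= B /\ Rabs (phi s t - phi s' t') <= L * (Rabs (s - s') + Rabs (t - t')).

Lemma Lip_const R0 c : Lip R0 (fun _ _ => c).
Proof. exists (Rabs c), 0. intros. split; [lra|]. rewrite Rminus_diag, Rabs_R0.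
  assert (0 <= Rabs (s - s') + Rabs (t - t')) by (pose proof (Rabs_pos (s-s')); pose proof (Rabs_pos (t-t')); lra). nra. Qed.

Lemma Lip_fst R0 : Lip R0 (fun s _ => s).
Proof. exists R0, 1. intros. split; [auto|]. pose proof (Rabs_pos (t-t')); lra. Qed.

Lemma Lip_snd R0 : Lip R0 (fun _ t => t).
Proof. exists R0, 1. intros. split; [auto|]. pose proof (Rabs_pos (s-s')); lra. Qed.

Lemma Lip_plus R0 f g : Lip R0 f -> Lip R0 g -> Lip R0 (fun s t => f s t + g s t).
Proof.
  intros [B1 [L1 H1]] [B2 [L2 H2]]. exists (B1 + B2), (L1 + L2). intros s t s' t' a b c d.
  destruct (H1 s t s' t' a b c d) as [A1 A2]. destruct (H2 s t s' t' a b c d) as [C1 C2].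
  split.
  - eapply Rle_trans; [apply Rabs_triang|lra].
  - replace (f s t + g s t - (f s' t' + g s' t')) with ((f s t - f s' t') + (g s t - g s' t')) by ring.
    eapply Rle_trans; [apply Rabs_triang|lra].
Qed.

Lemma Lip_mult R0 f g : Lip R0 f -> Lip R0 g -> Lip R0 (fun s t => f s t * g s t).
Proof.
  intros [B1 [L1 H1]] [B2 [L2 H2]]. exists (B1 * B2), (Rabs B1 * Rabs L2 + Rabs B2 * Rabs L1).
  intros s t s' t' a b c d.
  destruct (H1 s t s' t' a b c d) as [A1 A2]. destruct (H2 s t s' t' a b c d) as [C1 C2].
  destruct (H2 s' t' s' t' c d c d) as [C3 _].
  set (D := Rabs (s - s') + Rabs (t - t')) in *.
  assert (HD : 0 <= D) by (pose proof (Rabs_pos (s-s')); pose proof (Rabs_pos (t-t')); unfold D; lra).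
  pose proof (Rabs_pos (f s t)); pose proof (Rabs_pos (g s t)); pose proof (Rabs_pos (g s' t')).
  pose proof (Rabs_pos (f s t - f s' t')); pose proof (Rabs_pos (g s t - g s' t')).
  pose proof (Rle_abs B1); pose proof (Rle_abs B2); pose proof (Rle_abs L1); pose proof (Rle_abs L2).
  split.
  - rewrite Rabs_mult. apply Rmult_le_compat; auto.
  - replace (f s t * g s t - f s' t' * g s' t') with (f s t * (g s t - g s' t') + g s' t' * (f s t - f s' t')) by ring.
    eapply Rle_trans; [apply Rabs_triang|]. rewrite !Rabs_mult.
    assert (Rabs (f s t) * Rabs (g s t - g s' t') <= Rabs B1 * (Rabs L2 * D)).
    { apply Rmult_le_compat; try lra. nra. }
    assert (Rabs (g s' t') * Rabs (f s t - f s' t') <= Rabs B2 * (Rabs L1 * D)).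
    { apply Rmult_le_compat; try lra. nra. }
    nra.
Qed.

Lemma Lip_sum R0 (F : nat -> R -> R -> R) n :
  (forall i, Lip R0 (F i)) -> Lip R0 (fun s t => sum_f_R0 (fun i => F i s t) n).
Proof.
  intros H. induction n.
  - apply H.
  - apply (Lip_plus R0 (fun s t => sum_f_R0 (fun i => F i s t) n) (F (S n))); auto.
Qed.

Lemma Lip_pow R0 i : Lip R0 (fun s _ => s ^ i).
Proof.
  induction i.
  - apply (Lip_const R0 1).
  - apply (Lip_mult R0 (fun s _ => s) (fun s _ => s ^ i)); auto. apply Lip_fst.
Qed.

Lemma Lip_hh R0 i : Lip R0 (hh i).
Proof.
  induction i.
  - apply (Lip_const R0 0).
  - apply (Lip_plus R0 (fun s _ => s ^ i) (fun s t => t * hh i s t)). apply Lip_pow.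
    apply (Lip_mult R0 (fun _ t => t) (hh i)); auto. apply Lip_snd.
Qed.

Lemma Lip_DD R0 a n : Lip R0 (DD a n).
Proof.
  unfold DD. apply (Lip_sum R0 (fun i s t => a i * hh i s t)).
  intros i. apply (Lip_mult R0 (fun _ _ => a i) (hh i)). apply Lip_const. apply Lip_hh.
Qed.

Lemma cover (h : R) (m : nat) x : 0 < h -> 0 <= x <= INR m * h ->
  exists u, (u <= m)%nat /\ Rabs (x - INR u * h) <= h.
Proof.
  intros Hh. induction m; intros Hx.
  - exists 0%nat. split; [lia|]. simpl in *. replace (x - 0 * h) with 0 by lra.
    rewrite Rabs_R0; lra.
  - destruct (Rle_dec x (INR m * h)) as [Hle|Hgt].
    + destruct IHm as [u [Hu1 Hu2]]. lra. exists u. split; [lia|auto].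
    + exists (S m). split; [lia|]. rewrite S_INR in *.
      unfold Rabs; destruct Rcase_abs; lra.
Qed.

Lemma nat_gap (i j : nat) : Rabs (INR i - INR j) < 1 -> i = j.
Proof.
  intros H. destruct (Nat.lt_total i j) as [Hl|[E|Hl]]; auto; exfalso.
  - apply le_INR in Hl. rewrite S_INR in Hl. unfold Rabs in H; destruct Rcase_abs in H; lra.
  - apply le_INR in Hl. rewrite S_INR in Hl. unfold Rabs in H; destruct Rcase_abs in H; lra.
Qed.

Lemma abs2 A p q e : Rabs (A + p) <= e -> Rabs (A + q) <= e -> Rabs (p - q) <= 2 * e.
Proof. unfold Rabs; repeat destruct Rcase_abs; lra. Qed.

Lemma NoDup_prod {A B : Type} (l : list A) (l' : list B) :
  NoDup l -> NoDup l' -> NoDup (list_prod l l').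
Proof.
  intros H H'. induction H as [|x l Hx Hl IH]; simpl.
  - constructor.
  - apply NoDup_app; auto.
    + apply FinFun.Injective_map_NoDup; auto. intros y z E; congruence.
    + intros [y z] Hin Hin2. apply in_map_iff in Hin as [w [Ew _]]. inversion Ew; subst.
      apply in_prod_iff in Hin2 as [Hin2 _]. contradiction.
Qed.

Lemma count_lemma (N K : nat) (g : nat * nat * nat -> nat * nat) :
  (forall x, In x (list_prod (list_prod (seq 0 N) (seq 0 N)) (seq 0 N)) ->
     (fst (g x) <= K)%nat /\ (snd (g x) <= K)%nat) ->
  (forall x y, In x (list_prod (list_prod (seq 0 N) (seq 0 N)) (seq 0 N)) ->
     In y (list_prod (list_prod (seq 0 N) (seq 0 N)) (seq 0 N)) -> g x = g y -> x = y) ->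
  (N * N * N <= S K * S K)%nat.
Proof.
  intros Hr Hi.
  set (L3 := list_prod (list_prod (seq 0 N) (seq 0 N)) (seq 0 N)) in *.
  assert (HN : NoDup (map g L3)).
  { apply NoDup_map_NoDup_ForallPairs. intros x y Hx Hy. apply Hi; auto.
    unfold L3. repeat apply NoDup_prod; apply seq_NoDup. }
  assert (Hinc : incl (map g L3) (list_prod (seq 0 (S K)) (seq 0 (S K)))).
  { intros [u v] Hin. apply in_map_iff in Hin as [x [Ex Hx]].
    destruct (Hr x Hx) as [H1 H2]. rewrite Ex in H1, H2. simpl in H1, H2.
    apply in_prod_iff. split; apply in_seq; lia. }
  pose proof (NoDup_incl_length HN Hinc) as HL.
  rewrite length_map in HL. unfold L3 in HL. rewrite !length_prod, !length_seq in HL. exact HL.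
Qed.

Lemma grid R0 (phi1 phi2 phi3 : R -> R -> R) : 0 < R0 ->
  Lip R0 phi1 -> Lip R0 phi2 -> Lip R0 phi3 -> forall delta, 0 < delta ->
  exists al be ga, 0 <= al < delta /\ 0 <= be < delta /\ 0 <= ga < delta /\
    forall s t, Rabs s <= R0 -> Rabs t <= R0 ->
      ~ (phi1 s t + al = 0 /\ phi2 s t + be = 0 /\ phi3 s t + ga = 0).
Proof.
  intros HR [B1 [L1 H1]] [B2 [L2 H2]] [B3 [L3 H3]] delta Hd.
  set (L := Rabs L1 + Rabs L2 + Rabs L3 + 1).
  assert (HL : 1 <= L) by (unfold L; pose proof (Rabs_pos L1); pose proof (Rabs_pos L2); pose proof (Rabs_pos L3); lra).
  destruct (INR_unbounded (8 * L * R0 / delta)) as [m Hm].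
  assert (Hm0 : (0 < m)%nat).
  { destruct m; [|lia]. simpl in Hm. exfalso.
    assert (0 < 8 * L * R0 / delta) by (apply Rdiv_lt_0_compat; nra). lra. }
  set (N := ((m+1)*(m+1)+1)%nat).
  set (K := (N * m)%nat).
  assert (HN : 0 < INR N) by (apply lt_0_INR; unfold N; lia).
  assert (HK : 0 < INR K) by (apply lt_0_INR; unfold K, N; nia).
  set (eta := delta / INR N).
  set (h := 2 * R0 / INR K).
  assert (Heta : 0 < eta) by (apply Rdiv_lt_0_compat; lra).
  assert (Hh : 0 < h) by (apply Rdiv_lt_0_compat; lra).
  assert (HKh : INR K * h = 2 * R0) by (unfold h; field; lra).
  assert (Hkey : 4 * L * h < eta).
  { unfold h, eta, K. rewrite mult_INR.
    assert (HmR : 0 < INR m) by (apply lt_0_INR; auto).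
    apply Rmult_lt_reg_r with (INR N * INR m). nra.
    replace (4 * L * (2 * R0 / (INR N * INR m)) * (INR N * INR m)) with (8 * L * R0) by (field; lra).
    replace (delta / INR N * (INR N * INR m)) with (delta * INR m) by (field; lra).
    apply Rmult_lt_reg_r with (/ delta). apply Rinv_0_lt_compat; lra.
    replace (delta * INR m * / delta) with (INR m) by (field; lra). exact Hm. }
  assert (Hrange : forall i, (i < N)%nat -> 0 <= INR i * eta < delta).
  { intros i Hi. split. apply Rmult_le_pos; [apply pos_INR|lra].
    apply lt_INR in Hi. replace delta with (INR N * eta) by (unfold eta; field; lra). nra. }
  destruct (classic (exists i j k, (i < N)%nat /\ (j < N)%nat /\ (k < N)%nat /\
     forall s t, Rabs s <= R0 -> Rabs t <= R0 ->
      ~ (phi1 s t + INR i * eta = 0 /\ phi2 s t + INR j * eta = 0 /\ phi3 s t + INR k * eta = 0)))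
    as [[i [j [k [Hi [Hj [Hk Hgood]]]]]] | Hno].
  { exists (INR i * eta), (INR j * eta), (INR k * eta). repeat split; try apply Hrange; auto; apply Hrange; auto. }
  exfalso.
  set (c := fun u : nat => - R0 + INR u * h).
  assert (Hc : forall u, (u <= K)%nat -> Rabs (c u) <= R0).
  { intros u Hu. apply le_INR in Hu. unfold c.
    assert (0 <= INR u * h) by (apply Rmult_le_pos; [apply pos_INR|lra]).
    assert (INR u * h <= 2 * R0) by (rewrite <- HKh; apply Rmult_le_compat_r; lra).
    unfold Rabs; destruct Rcase_abs; lra. }
  set (P := fun (x : nat * nat * nat) (uv : nat * nat) =>
     (fst uv <= K)%nat /\ (snd uv <= K)%nat /\
     Rabs (phi1 (c (fst uv)) (c (snd uv)) + INR (fst (fst x)) * eta) <= 2 * L * h /\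
     Rabs (phi2 (c (fst uv)) (c (snd uv)) + INR (snd (fst x)) * eta) <= 2 * L * h /\
     Rabs (phi3 (c (fst uv)) (c (snd uv)) + INR (snd x) * eta) <= 2 * L * h).
  assert (Hex : forall x, In x (list_prod (list_prod (seq 0 N) (seq 0 N)) (seq 0 N)) -> exists uv, P x uv).
  { intros [[i j] k] Hx. apply in_prod_iff in Hx as [Hx Hk]. apply in_prod_iff in Hx as [Hi Hj].
    apply in_seq in Hi, Hj, Hk. simpl in Hi, Hj, Hk.
    assert (Hb : exists s t, Rabs s <= R0 /\ Rabs t <= R0 /\
      (phi1 s t + INR i * eta = 0 /\ phi2 s t + INR j * eta = 0 /\ phi3 s t + INR k * eta = 0)).
    { apply NNPP. intro Hn. apply Hno. exists i, j, k. repeat split; try lia.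
      intros s t Hs Ht Hbad. apply Hn. exists s, t. auto. }
    destruct Hb as [s [t [Hs [Ht [E1 [E2 E3]]]]]].
    assert (Hs' : 0 <= s + R0 <= INR K * h) by (rewrite HKh; unfold Rabs in Hs; destruct Rcase_abs in Hs; lra).
    assert (Ht' : 0 <= t + R0 <= INR K * h) by (rewrite HKh; unfold Rabs in Ht; destruct Rcase_abs in Ht; lra).
    destruct (cover h K (s + R0) Hh Hs') as [u [Hu Hu']].
    destruct (cover h K (t + R0) Hh Ht') as [v [Hv Hv']].
    exists (u, v). unfold P; simpl.
    assert (Dsu : Rabs (c u - s) <= h).
    { unfold c. replace (- R0 + INR u * h - s) with (- (s + R0 - INR u * h)) by ring. rewrite Rabs_Ropp; auto. }
    assert (Dtv : Rabs (c v - t) <= h).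
    { unfold c. replace (- R0 + INR v * h - t) with (- (t + R0 - INR v * h)) by ring. rewrite Rabs_Ropp; auto. }
    assert (HD : Rabs (c u - s) + Rabs (c v - t) <= 2 * h) by lra.
    assert (HD0 : 0 <= Rabs (c u - s) + Rabs (c v - t)) by (pose proof (Rabs_pos (c u - s)); pose proof (Rabs_pos (c v - t)); lra).
    pose proof (Hc u Hu) as Hcu. pose proof (Hc v Hv) as Hcv.
    destruct (H1 (c u) (c v) s t Hcu Hcv Hs Ht) as [_ G1].
    destruct (H2 (c u) (c v) s t Hcu Hcv Hs Ht) as [_ G2].
    destruct (H3 (c u) (c v) s t Hcu Hcv Hs Ht) as [_ G3].
    pose proof (Rle_abs L1); pose proof (Rle_abs L2); pose proof (Rle_abs L3).
    pose proof (Rabs_pos L1); pose proof (Rabs_pos L2); pose proof (Rabs_pos L3).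
    repeat split; auto.
    - replace (phi1 (c u) (c v) + INR i * eta) with (phi1 (c u) (c v) - phi1 s t) by lra.
      eapply Rle_trans; [exact G1|]. unfold L. nra.
    - replace (phi2 (c u) (c v) + INR j * eta) with (phi2 (c u) (c v) - phi2 s t) by lra.
      eapply Rle_trans; [exact G2|]. unfold L. nra.
    - replace (phi3 (c u) (c v) + INR k * eta) with (phi3 (c u) (c v) - phi3 s t) by lra.
      eapply Rle_trans; [exact G3|]. unfold L. nra. }
  set (g := fun x => epsilon (inhabits (0%nat, 0%nat)) (P x)).
  assert (Hg : forall x, In x (list_prod (list_prod (seq 0 N) (seq 0 N)) (seq 0 N)) -> P x (g x)).
  { intros x Hx. unfold g. apply epsilon_spec. apply Hex; auto. }
  assert (Hclose : forall i i', Rabs (INR i * eta - INR i' * eta) <= 2 * (2 * L * h) -> i = i').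
  { intros i i' Hii. apply nat_gap.
    replace (INR i * eta - INR i' * eta) with ((INR i - INR i') * eta) in Hii by ring.
    rewrite Rabs_mult, (Rabs_right eta) in Hii by lra.
    apply Rmult_lt_reg_r with eta; lra. }
  pose proof (count_lemma N K g) as Hcount.
  assert (HC : (N * N * N <= S K * S K)%nat).
  { apply Hcount.
    - intros x Hx. destruct (Hg x Hx) as [A [B _]]. auto.
    - intros x y Hx Hy Exy. destruct (Hg x Hx) as [_ [_ [X1 [X2 X3]]]].
      destruct (Hg y Hy) as [_ [_ [Y1 [Y2 Y3]]]]. rewrite Exy in X1, X2, X3.
      destruct x as [[i j] k], y as [[i' j'] k']; simpl in *.
      rewrite (Hclose i i' (abs2 _ _ _ _ X1 Y1)), (Hclose j j' (abs2 _ _ _ _ X2 Y2)),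
        (Hclose k k' (abs2 _ _ _ _ X3 Y3)). reflexivity. }
  unfold K, N in HC. nia.
Qed.

Lemma hh_sym i s t : hh i s t = hh i t s.
Proof.
  destruct (Req_dec s t) as [E|Hne]. subst; auto.
  apply Rmult_eq_reg_l with (s - t); [|lra].
  rewrite hh_diff. replace ((s - t) * hh i t s) with (- ((t - s) * hh i t s)) by ring.
  rewrite hh_diff. ring.
Qed.

Lemma hh_nonneg i s t : 0 <= s -> 0 <= t -> 0 <= hh i s t.
Proof.
  intros Hs Ht. induction i; simpl; [lra|].
  pose proof (pow_le s i Hs). nra.
Qed.

Lemma hh_neg i s t : hh i (-s) (-t) = (-1) ^ (S i) * hh i s t.
Proof.
  induction i; simpl hh; [ring|]. rewrite IHi.
  rewrite <- (Rmult_1_l s) at 1. replace (-(1 * s)) with ((-1) * s) by ring.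
  rewrite Rpow_mult_distr. simpl pow. ring.
Qed.

Lemma even_pow_ge0 x k : 0 <= x ^ (2 * k).
Proof. rewrite pow_mult. apply pow_le. nra. Qed.

Lemma hh_odd_lb k s t : (s ^ (2 * k) + t ^ (2 * k)) / 4 <= hh (S (2 * k)) s t.
Proof.
  pose proof (even_pow_ge0 s k) as As. pose proof (even_pow_ge0 t k) as At.
  assert (Hpos : forall x y, 0 <= x -> 0 <= y -> (x ^ (2 * k) + y ^ (2 * k)) / 4 <= hh (S (2 * k)) x y).
  { intros x y Hx Hy. pose proof (even_pow_ge0 x k). pose proof (even_pow_ge0 y k).
    assert (x ^ (2 * k) <= hh (S (2 * k)) x y).
    { change (hh (S (2 * k)) x y) with (x ^ (2 * k) + y * hh (2 * k) x y).
      pose proof (hh_nonneg (2 * k) x y Hx Hy). pose proof (Rmult_le_pos _ _ Hy H1). lra. }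
    assert (y ^ (2 * k) <= hh (S (2 * k)) x y).
    { rewrite hh_sym. change (hh (S (2 * k)) y x) with (y ^ (2 * k) + x * hh (2 * k) y x).
      pose proof (hh_nonneg (2 * k) y x Hy Hx). pose proof (Rmult_le_pos _ _ Hx H2). lra. }
    lra. }
  assert (Hopp : forall x y, 0 < x -> y < 0 -> (x ^ (2 * k) + y ^ (2 * k)) / 4 <= hh (S (2 * k)) x y).
  { intros x y Hx Hy. pose proof (even_pow_ge0 x k) as Ax. pose proof (even_pow_ge0 y k) as Ay.
    pose proof (hh_diff (S (2 * k)) x y) as E. change (x ^ S (2 * k)) with (x * x ^ (2 * k)) in E.
    change (y ^ S (2 * k)) with (y * y ^ (2 * k)) in E.
    set (A := x ^ (2 * k)) in *. set (B := y ^ (2 * k)) in *. set (H := hh (S (2 * k)) x y) in *.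
    destruct (Rle_dec (- y) x) as [Hxy|Hxy].
    - assert (B <= A).
      { unfold A, B. rewrite !pow_mult. apply pow_incr. nra. }
      assert (0 <= (x + y) * (3 * A - B)) by (apply Rmult_le_pos; lra).
      assert (0 <= (- y) * (A + B)) by (apply Rmult_le_pos; lra).
      apply Rmult_le_reg_l with (x - y); [lra|]. rewrite E. lra.
    - assert (A <= B).
      { unfold A, B. rewrite !pow_mult. apply pow_incr. nra. }
      assert (0 <= (- y - x) * (3 * B - A)) by (apply Rmult_le_pos; lra).
      assert (0 <= x * (A + B)) by (apply Rmult_le_pos; lra).
      apply Rmult_le_reg_l with (x - y); [lra|]. rewrite E. lra. }
  assert (Hev : forall a, (- a) ^ (2 * k) = a ^ (2 * k)) by (intro; rewrite !pow_mult; f_equal; ring).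
  assert (Hneg : forall x y, x <= 0 -> y <= 0 -> (x ^ (2 * k) + y ^ (2 * k)) / 4 <= hh (S (2 * k)) x y).
  { intros x y Hx Hy. rewrite <- (Hev x), <- (Hev y).
    replace (hh (S (2 * k)) x y) with (hh (S (2 * k)) (- - x) (- - y)) by (rewrite !Ropp_involutive; auto).
    rewrite (hh_neg _ (- x) (- y)). replace ((-1) ^ (S (S (2 * k)))) with 1.
    2: { rewrite <- (pow_1_even (S k)). f_equal. lia. }
    rewrite Rmult_1_l. apply Hpos; lra. }
  destruct (Rle_dec 0 s), (Rle_dec 0 t).
  - apply Hpos; auto.
  - destruct (Req_dec s 0) as [E|E].
    + apply Hneg; lra.
    + apply Hopp; lra.
  - rewrite hh_sym, Rplus_comm.
    destruct (Req_dec t 0) as [E|E].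
    + apply Hneg; lra.
    + apply Hopp; lra.
  - apply Hneg; lra.
Qed.

Lemma hh_abs i s t : Rabs (hh i s t) <= INR i * (1 + Rabs s + Rabs t) ^ pred i.
Proof.
  set (W := 1 + Rabs s + Rabs t).
  assert (HW : 0 <= Rabs s <= W /\ 0 <= Rabs t <= W) by (unfold W; pose proof (Rabs_pos s); pose proof (Rabs_pos t); lra).
  induction i.
  - simpl. rewrite Rabs_R0. lra.
  - change (hh (S i) s t) with (s ^ i + t * hh i s t).
    eapply Rle_trans; [apply Rabs_triang|]. rewrite Rabs_mult, <- RPow_abs.
    assert (Rabs s ^ i <= W ^ i) by (apply pow_incr; lra).
    rewrite S_INR. simpl pred.
    destruct i.
    + simpl in *. rewrite Rabs_R0 in *. lra.
    + simpl pred in IHi. 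
      assert (Rabs t * Rabs (hh (S i) s t) <= W * (INR (S i) * W ^ i)).
      { apply Rmult_le_compat; try lra. apply Rabs_pos. }
      change (W ^ S i) with (W * W ^ i) in *. nra.
Qed.

Lemma DD_bound q j s t :
  Rabs (DD q j s t) <= sum_f_R0 (fun i => Rabs (q i)) j * (INR j * (1 + Rabs s + Rabs t) ^ pred j).
Proof.
  set (W := 1 + Rabs s + Rabs t).
  assert (HW : 1 <= W) by (unfold W; pose proof (Rabs_pos s); pose proof (Rabs_pos t); lra).
  unfold DD. eapply Rle_trans; [apply sum_f_R0_triangle|].
  rewrite Rmult_comm, scal_sum. apply sum_Rle. intros i Hi.
  rewrite Rabs_mult. apply Rmult_le_compat_l; [apply Rabs_pos|].
  eapply Rle_trans; [apply hh_abs|]. fold W.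
  apply Rmult_le_compat; [apply pos_INR| apply pow_le; lra | apply le_INR; auto |].
  apply Rle_pow; auto. lia.
Qed.

Lemma DD_sym q n s t : DD q n s t = DD q n t s.
Proof. unfold DD. apply sum_eq. intros i _. rewrite hh_sym. auto. Qed.

Lemma odd_compact q k : (1 <= k)%nat -> q (S (2 * k)) <> 0 ->
  exists R0, 0 < R0 /\ forall be s t, Rabs be <= 1 -> DD q (S (2 * k)) s t + be = 0 ->
    Rabs s <= R0 /\ Rabs t <= R0.
Proof.
  intros Hk Hq.
  set (j := (2 * k)%nat). set (p := pred j).
  set (C := sum_f_R0 (fun i => Rabs (q i)) j).
  assert (HC : 0 <= C) by (apply cond_pos_sum; intros; apply Rabs_pos).
  set (M := C * INR j).
  assert (HM : 0 <= M) by (apply Rmult_le_pos; [auto|apply pos_INR]).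
  set (Z := 3 ^ p).
  assert (HZ : 0 < Z) by (apply pow_lt; lra).
  set (Q := Rabs (q (S j))).
  assert (HQ : 0 < Q) by (apply Rabs_pos_lt; auto).
  set (R0 := 4 * (M * Z + 1) / Q + 1).
  assert (HR0 : 1 <= R0).
  { unfold R0. assert (0 <= 4 * (M * Z + 1) / Q) by (unfold Rdiv; apply Rmult_le_pos; [nra|left; apply Rinv_0_lt_compat; lra]). lra. }
  assert (Core : forall be s t, Rabs be <= 1 -> Rabs s <= Rabs t -> R0 < Rabs t ->
     DD q (S j) s t + be <> 0).
  { intros be s t Hbe Hst Ht E.
    set (X := Rabs t) in *.
    set (W := 1 + Rabs s + X).
    assert (HW : 0 <= W <= 3 * X) by (unfold W; pose proof (Rabs_pos s); lra).
    rewrite DD_S in E.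
    assert (Hlow := hh_odd_lb k s t). change (2 * k)%nat with j in Hlow.
    assert (Hhpos : 0 <= hh (S j) s t) by (pose proof (even_pow_ge0 s k) as G1; pose proof (even_pow_ge0 t k) as G2; change (2 * k)%nat with j in G1, G2; lra).
    assert (Htj : t ^ j = X ^ j).
    { unfold X. rewrite RPow_abs. rewrite Rabs_right; auto. apply Rle_ge. apply even_pow_ge0. }
    assert (Hsj : 0 <= s ^ j) by apply even_pow_ge0.
    assert (E2 : Q * hh (S j) s t <= M * W ^ p + 1).
    { assert (Q * hh (S j) s t = Rabs (DD q j s t + be)).
      { unfold Q. rewrite <- (Rabs_right (hh (S j) s t)) by lra. rewrite <- Rabs_mult.
        replace (q (S j) * hh (S j) s t) with (- (DD q j s t + be)) by lra. apply Rabs_Ropp. }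
      rewrite H. eapply Rle_trans; [apply Rabs_triang|].
      pose proof (DD_bound q j s t) as H0. change (Rabs t) with X in H0.
      change (1 + Rabs s + X) with W in H0. change (pred j) with p in H0. fold C in H0.
      unfold M. rewrite Rmult_assoc. lra. }
    assert (HWp : W ^ p <= Z * X ^ p).
    { unfold Z. rewrite <- Rpow_mult_distr. apply pow_incr. lra. }
    assert (HXj : X ^ j = X * X ^ p) by (unfold p, j; replace (2 * k)%nat with (S (pred (2 * k))) at 1 by lia; reflexivity).
    assert (HY : 1 <= X ^ p) by (apply pow_R1_Rle; lra).
    set (Y := X ^ p) in *.
    assert (Q * (X * Y) / 4 <= M * Z * Y + Y).
    { assert (Q * (X * Y) / 4 <= Q * hh (S j) s t).
      { rewrite <- HXj, <- Htj. apply Rmult_le_reg_r with (/ Q). apply Rinv_0_lt_compat; lra.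
        replace (Q * t ^ j / 4 * / Q) with (t ^ j / 4) by (field; lra).
        replace (Q * hh (S j) s t * / Q) with (hh (S j) s t) by (field; lra). lra. }
      assert (M * W ^ p <= M * (Z * Y)) by (apply Rmult_le_compat_l; auto). nra. }
    assert (Q * X / 4 <= M * Z + 1).
    { apply Rmult_le_reg_r with Y; [lra|]. nra. }
    assert (X <= 4 * (M * Z + 1) / Q).
    { apply Rmult_le_reg_l with Q; [lra|]. replace (Q * (4 * (M * Z + 1) / Q)) with (4 * (M * Z + 1)) by (field; lra). lra. }
    unfold R0 in Ht. lra. }
  exists R0. split; [lra|]. intros be s t Hbe E. fold j in E.
  assert (Hs : Rabs s <= R0).
  { destruct (Rle_dec (Rabs s) R0); auto. exfalso.
    destruct (Rle_dec (Rabs t) (Rabs s)).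
    - apply (Core be t s Hbe); [lra | lra | rewrite DD_sym; auto].
    - apply (Core be s t Hbe); [lra | lra | auto]. }
  assert (Ht : Rabs t <= R0).
  { destruct (Rle_dec (Rabs t) R0); auto. exfalso.
    destruct (Rle_dec (Rabs s) (Rabs t)).
    - apply (Core be s t Hbe); [lra | lra | auto].
    - apply (Core be t s Hbe); [lra | lra | rewrite DD_sym; auto]. }
  auto.
Qed.

Lemma DD_shift q al n s t : (1 <= n)%nat ->
  DD (fun i => q i + (if Nat.eqb i 1 then al else 0)) n s t = DD q n s t + al.
Proof.
  intros Hn. destruct n; [lia|]. clear Hn. induction n.
  - unfold DD. simpl. ring.
  - rewrite (DD_S _ (S n)), IHn, (DD_S q (S n)). replace (S (S n) =? 1)%nat with false by reflexivity. ring.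
Qed.

Lemma DD_1 q s t : DD q 1 s t = q 1%nat.
Proof. unfold DD. simpl. ring. Qed.

Definition pert (a : nat -> R) (top : nat) (tau al : R) : nat -> R :=
  fun i => (a i + (if Nat.eqb i top then tau else 0)) + (if Nat.eqb i 1 then al else 0).

Lemma pert_close a top tau al k : Rabs tau <= k -> Rabs al <= k ->
  forall i, Rabs (pert a top tau al i - a i) <= 2 * k.
Proof.
  intros H1 H2 i. unfold pert.
  destruct (Nat.eqb i top), (Nat.eqb i 1);
  match goal with |- Rabs ?x <= _ => ring_simplify x end;
  try (rewrite Rabs_R0; pose proof (Rabs_pos tau); lra);
  try (eapply Rle_trans; [apply Rabs_triang|]); pose proof (Rabs_pos tau); pose proof (Rabs_pos al); lra.
Qed.

Lemma pert_top a top tau al : top <> 1%nat \/ al = 0 -> pert a top tau al top = a top + tau.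
Proof.
  intros H. unfold pert. rewrite Nat.eqb_refl.
  destruct H as [H|H].
  - apply Nat.eqb_neq in H. rewrite H. ring.
  - subst. destruct (Nat.eqb top 1); ring.
Qed.

Lemma sum_sq_bound a a' n k : (forall i, Rabs (a' i - a i) <= k) ->
  sum_f_R0 (fun i => (a i - a' i) ^ 2) n <= INR (S n) * k ^ 2.
Proof.
  intros H.
  assert (Hi : forall i, (a i - a' i) ^ 2 <= k ^ 2).
  { intros i. rewrite <- pow2_abs. replace (a i - a' i) with (- (a' i - a i)) by ring.
    rewrite Rabs_Ropp. apply pow_incr. split; [apply Rabs_pos|auto]. }
  induction n.
  - simpl. specialize (Hi 0%nat). lra.
  - rewrite tech5, (S_INR (S n)). specialize (Hi (S n)). lra.
Qed.

Lemma top_fix x k : 0 < k -> exists tau, Rabs tau <= k /\ x + tau <> 0.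
Proof.
  intros Hk. destruct (Req_dec x 0).
  - exists k. rewrite Rabs_right by lra. split; lra.
  - exists 0. rewrite Rabs_R0. split; lra.
Qed.

Lemma sum_sq_nonneg a a' n : 0 <= sum_f_R0 (fun i => (a i - a' i) ^ 2) n.
Proof. apply cond_pos_sum. intros. apply pow2_ge_0. Qed.

Lemma dense_Q d : (2 <= d)%nat -> dense_in_A d (in_Q d).
Proof.
  intros hd a b c eps Heps.
  set (D := INR (S d)).
  assert (HD : 1 <= D) by (unfold D; rewrite S_INR; pose proof (pos_INR d); lra).
  set (k := eps / (4 * D)).
  assert (Hk : 0 < k) by (unfold k; apply Rdiv_lt_0_compat; lra).
  destruct (top_fix (a (d-2)%nat) k Hk) as [ta [Hta Ha]].
  destruct (top_fix (b (d-1)%nat) k Hk) as [tb [Htb Hb]].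
  destruct (top_fix (c d) k Hk) as [tc [Htc Hc]].
  assert (Hex : exists al be ga, Rabs al <= k /\ Rabs be <= k /\ Rabs ga <= k /\
     in_Q d (pert a (d-2) ta al) (pert b (d-1) tb be) (pert c d tc ga)).
  { assert (Hcases : d = 2%nat \/ d = 3%nat \/ (4 <= d)%nat) by lia.
    destruct Hcases as [E|[E|E]].
    - subst d. exists 0, 0, 0. rewrite Rabs_R0.
      split; [lra|]. split; [lra|]. split; [lra|]. unfold in_Q.
      split; [|split; [|split]].
      + apply knot_crit. intros s t [_ [H _]].
        replace (2 - 1)%nat with 1%nat in H by reflexivity. rewrite DD_1 in H.
        rewrite pert_top in H by auto. simpl in Hb. lra.
      + rewrite pert_top by auto. auto.
      + rewrite pert_top by auto. auto.
      + rewrite pert_top by auto. auto.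
    - subst d. exists 0, 0, 0. rewrite Rabs_R0.
      split; [lra|]. split; [lra|]. split; [lra|]. unfold in_Q.
      split; [|split; [|split]].
      + apply knot_crit. intros s t [H _].
        replace (3 - 2)%nat with 1%nat in H by reflexivity. rewrite DD_1 in H.
        rewrite pert_top in H by auto. simpl in Ha. lra.
      + rewrite pert_top by auto. auto.
      + rewrite pert_top by auto. auto.
      + rewrite pert_top by auto. auto.
    - set (a0 := fun i => a i + (if Nat.eqb i (d-2) then ta else 0)).
      set (b0 := fun i => b i + (if Nat.eqb i (d-1) then tb else 0)).
      set (c0 := fun i => c i + (if Nat.eqb i d then tc else 0)).
      assert (Hcomp : exists R0, 0 < R0 /\ forall al be ga s t, Rabs al <= 1 -> Rabs be <= 1 -> Rabs ga <= 1 ->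
         DD a0 (d-2) s t + al = 0 -> DD b0 (d-1) s t + be = 0 -> DD c0 d s t + ga = 0 ->
         Rabs s <= R0 /\ Rabs t <= R0).
      { destruct (Nat.Even_or_Odd d) as [[m Hm]|[m Hm]].
        - assert (Hb0 : b0 (S (2 * (m - 1))) <> 0).
          { replace (S (2 * (m - 1))) with (d - 1)%nat by lia. unfold b0. rewrite Nat.eqb_refl. auto. }
          destruct (odd_compact b0 (m - 1) ltac:(lia) Hb0) as [R0 [HR0 HC]].
          exists R0. split; auto. intros al be ga s t _ Hbe _ _ E2 _.
          apply (HC be); auto. replace (S (2 * (m - 1))) with (d - 1)%nat by lia. auto.
        - assert (Hc0 : c0 (S (2 * m)) <> 0).
          { replace (S (2 * m)) with d by lia. unfold c0. rewrite Nat.eqb_refl. auto. }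
          destruct (odd_compact c0 m ltac:(lia) Hc0) as [R0 [HR0 HC]].
          exists R0. split; auto. intros al be ga s t _ _ Hga _ _ E3.
          apply (HC ga); auto. replace (S (2 * m)) with d by lia. auto. }
      destruct Hcomp as [R0 [HR0 Hcomp]].
      assert (Hdel : 0 < Rmin k 1) by (apply Rmin_pos; lra).
      destruct (grid R0 (DD a0 (d-2)) (DD b0 (d-1)) (DD c0 d) HR0 (Lip_DD R0 a0 (d-2))
        (Lip_DD R0 b0 (d-1)) (Lip_DD R0 c0 d) (Rmin k 1) Hdel) as [al [be [ga [Hal [Hbe [Hga Hgood]]]]]].
      pose proof (Rmin_l k 1). pose proof (Rmin_r k 1).
      exists al, be, ga. split; [|split; [|split]]; [| | |unfold in_Q; split; [|split; [|split]]].
      + rewrite Rabs_right; lra.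
      + rewrite Rabs_right; lra.
      + rewrite Rabs_right; lra.
      + apply knot_crit. intros s t [H1 [H2 H3]].
        assert (E1 : DD (pert a (d-2) ta al) (d-2) s t = DD a0 (d-2) s t + al) by (apply (DD_shift a0); lia).
        assert (E2 : DD (pert b (d-1) tb be) (d-1) s t = DD b0 (d-1) s t + be) by (apply (DD_shift b0); lia).
        assert (E3 : DD (pert c d tc ga) d s t = DD c0 d s t + ga) by (apply (DD_shift c0); lia).
        rewrite E1 in H1. rewrite E2 in H2. rewrite E3 in H3.
        destruct (Hcomp al be ga s t) as [Hs Ht]; try (rewrite Rabs_right; lra); auto.
        apply (Hgood s t Hs Ht). auto.
      + rewrite pert_top by (left; lia). auto.
      + rewrite pert_top by (left; lia). auto.
      + rewrite pert_top by (left; lia). auto. }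
  destruct Hex as [al [be [ga [Hal [Hbe [Hga HQ]]]]]].
  exists (pert a (d-2) ta al), (pert b (d-1) tb be), (pert c d tc ga). split; auto.
  unfold A_dist.
  pose proof (sum_sq_bound a _ (d-2) (2 * k) (pert_close a (d-2) ta al k Hta Hal)) as S1.
  pose proof (sum_sq_bound b _ (d-1) (2 * k) (pert_close b (d-1) tb be k Htb Hbe)) as S2.
  pose proof (sum_sq_bound c _ d (2 * k) (pert_close c d tc ga k Htc Hga)) as S3.
  assert (I1 : INR (S (d-2)) <= D) by (apply le_INR; lia).
  assert (I2 : INR (S (d-1)) <= D) by (apply le_INR; lia).
  pose proof (sum_sq_nonneg a (pert a (d-2) ta al) (d-2)).
  pose proof (sum_sq_nonneg b (pert b (d-1) tb be) (d-1)).
  pose proof (sum_sq_nonneg c (pert c d tc ga) d).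
  assert (Hk2 : 0 <= (2 * k) ^ 2) by apply pow2_ge_0.
  assert (Hbig : 3 * D * (2 * k) ^ 2 < eps ^ 2).
  { unfold k. replace (3 * D * (2 * (eps / (4 * D))) ^ 2) with (3 * eps ^ 2 / (4 * D)) by (field; lra).
    apply Rmult_lt_reg_r with (4 * D); [lra|].
    replace (3 * eps ^ 2 / (4 * D) * (4 * D)) with (3 * eps ^ 2) by (field; lra).
    assert (0 < eps ^ 2) by (apply pow_lt; lra). nra. }
  rewrite <- (sqrt_pow2 eps) by lra. apply sqrt_lt_1_alt. split.
  - lra.
  - fold D in S3. nra.
Qed.

Theorem mainTheorem13 (d : nat) (hd : (2 <= d)%nat) :
  dense_in_A d (in_Q d) /\ dense_in_A d (in_P d) /\ dense_in_A d (in_O d).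
Proof.
  pose proof (dense_Q d hd) as HQ. split; [auto|split].
  - intros a b c eps He. destruct (HQ a b c eps He) as [a' [b' [c' [[Hk [H1 [H2 H3]]] Hd]]]].
    exists a', b', c'. split; auto. split; auto.
    exists (Z.of_nat (d-2)), (Z.of_nat (d-1)), (Z.of_nat d).
    repeat split.
    + right. exists (d-2)%nat. repeat split; auto. intros; lia.
    + right. exists (d-1)%nat. repeat split; auto. intros; lia.
    + right. exists d. repeat split; auto. intros; lia.
    + lia.
    + lia.
  - intros a b c eps He. destruct (HQ a b c eps He) as [a' [b' [c' [[Hk _] Hd]]]].
    exists a', b', c'. split; auto.
Qed.
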